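(* Let $R$ be a Noetherian integral domain. If every ideal of $R[X]$ is power stable, then $R$ is a field.
   Context: An ideal $I$ of the polynomial ring $R[X]$ over an integral domain $R$ is called power stable if $I^t\cap R = (I\cap R)^t$ for all integers $t\geq 1$. *)

(* Defs.v *)
From HB Require Import structures.
From mathcomp Require Import all_boot all_order all_algebra.
Set Implicit Arguments. Unset Strict Implicit. Unset Printing Implicit Defensive.
Import GRing.Theory.
Local Open Scope ring_scope.

Definition is_ideal (A : comNzRingType) (I : A -> Prop) : Prop :=
  [/\ I 0,
      (forall x y, I x -> I y -> I (x + y)) &
      (forall a x, I x -> I (a * x))].

Inductive ideal_mul (A : comNzRingType) (I J : A -> Prop) : A -> Prop :=
  | ideal_mul0 : ideal_mul I J 0
  | ideal_mul_gen x y : I x -> J y -> ideal_mul I J (x * y)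
  | ideal_mul_add a b : ideal_mul I J a -> ideal_mul I J b -> ideal_mul I J (a + b).

Fixpoint ideal_pow (A : comNzRingType) (I : A -> Prop) (t : nat) : A -> Prop :=
  match t with
  | 0 => fun _ => True
  | t'.+1 => ideal_mul I (ideal_pow I t')
  end.

(* The contraction I ∩ R of an ideal I of R[X], identifying R with constants. *)
Definition contraction (R : comNzRingType) (I : {poly R} -> Prop) : R -> Prop :=
  fun r => I r%:P.

Definition power_stable (R : comNzRingType) (I : {poly R} -> Prop) : Prop :=
  forall t : nat, (1 <= t)%N ->
    forall r : R, contraction (ideal_pow I t) r <-> ideal_pow (contraction I) t r.

Definition noetherian (A : comNzRingType) : Prop :=
  forall I : A -> Prop, is_ideal I ->
    exists s : seq A, forall x : A,
      I x <-> exists c : seq A, x = \sum_(i < size s) c`_i * s`_i.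

Definition is_field (A : comUnitRingType) : Prop :=
  forall x : A, x != 0 -> x \is a GRing.unit.

(* Main.v *)
Require Import Defs.
From mathcomp Require Import all_boot all_order all_algebra.
Set Implicit Arguments. Unset Strict Implicit. Unset Printing Implicit Defensive.
Import GRing.Theory.
Local Open Scope ring_scope.

Section S.
Variable R : idomainType.
Variable a : R.

Definition i0 : 'I_2 := ord0.
Definition i1 : 'I_2 := ord_max.

Lemma mul2E (M N : 'M[R]_2) i j : (M * N) i j = M i i0 * N i0 j + M i i1 * N i1 j.
Proof.
rewrite -mulmxE mxE big_ord_recl big_ord_recl big_ord0 addr0.
congr (_ * _ + _ * _); congr (_ _ _); apply: val_inj => //.
Qed.

Definition Cm : 'M[R]_2 := \matrix_(i, j)
  (if (i == i0) then (if (j == i0) then 0 else a) else (if (j == i0) then 1 else 0)).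

Definition Phi (p : {poly R}) : 'M[R]_2 := horner_mx Cm p.

Lemma ord2 (i : 'I_2) : i = i0 \/ i = i1.
Proof. case: i => [[|[|k]] Hk]; [left|right|by []]; exact: val_inj. Qed.

Lemma C2 : Cm * Cm = a%:M.
Proof.
apply/matrixP => i j; rewrite mul2E !mxE.
by case: (ord2 i) => ->; case: (ord2 j) => ->; rewrite /= ?mulr0 ?mul0r ?mulr1 ?mul1r ?add0r ?addr0.
Qed.

Lemma Phi01 p : exists r, Phi p i0 i1 = a * r.
Proof.
elim/poly_ind: p => [|p c [r Hr]].
  by exists 0; rewrite /Phi rmorph0 mxE mulr0.
rewrite /Phi rmorphD rmorphM /= horner_mx_X horner_mx_C.
rewrite mxE mul2E -/(Phi p) Hr !mxE /=.
by exists (Phi p i0 i0); rewrite mulr0 mulr0n !addr0 mulrC.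
Qed.

Definition Iq (p : {poly R}) : Prop :=
  exists u v, p = u * ('X^2 - a%:P) + v * (a%:P * 'X).

Lemma Iq_ideal : is_ideal Iq.
Proof.
split.
- by exists 0, 0; rewrite !mul0r addr0.
- move=> x y [u [v ->]] [u' [v' ->]]; exists (u + u'), (v + v').
  by rewrite !mulrDl addrACA.
- move=> b x [u [v ->]]; exists (b * u), (b * v).
  by rewrite mulrDr !mulrA.
Qed.

Lemma Iq_contr r : Iq r%:P -> exists s, r = a * (a * s).
Proof.
move=> [u [v E]].
have := congr1 (fun p => Phi p i0 i0) E.
rewrite /Phi rmorphD !rmorphM /= rmorphB rmorphXn /= horner_mx_X !horner_mx_C.
rewrite expr2 C2 subrr mulr0 add0r -/(Phi v) -mulmxE mul_scalar_mx mxE.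
rewrite mul2E !mxE /=.
have [s Hs] := Phi01 v.
rewrite Hs mulr1n => ->.
by exists s; rewrite !mulr0 add0r mulr1 mulrC.
Qed.

Lemma pow2_bound (J : R -> Prop) (HJ : forall r, J r -> exists s, r = a * (a * s)) z :
  ideal_pow J 2 z -> exists s, z = a^+4 * s.
Proof.
elim => [|x y Jx Hy|p q _ IH1 _ IH2].
- by exists 0; rewrite mulr0.
- have [s Hs] := HJ x Jx.
  have [t Ht] : exists t, y = a * (a * t).
    elim: Hy => [|x' y' Jx' _|p' q' _ IH1 _ IH2].
    + by exists 0; rewrite !mulr0.
    + have [s' ->] := HJ x' Jx'; exists (s' * y'); by rewrite !mulrA.
    + case: IH1 => [s1 ->]; case: IH2 => [s2 ->].
      by exists (s1 + s2); rewrite !mulrDr.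
  exists (s * t); rewrite Hs Ht.
  rewrite !exprS expr0 mulr1 -!mulrA; congr (_ * _).
  by rewrite [s * (a * _)]mulrCA [s * (a * _)]mulrCA.
- case: IH1 => [s1 ->]; case: IH2 => [s2 ->].
  by exists (s1 + s2); rewrite mulrDr.
Qed.

Lemma a3_in : contraction (ideal_pow Iq 2) (a ^+ 3).
Proof.
rewrite /contraction /=.
have one : forall z, Iq z -> ideal_mul Iq (fun _ => True) z.
  by move=> z Hz; rewrite -[z]mulr1; apply: ideal_mul_gen.
have IaX : Iq (a%:P * 'X) by exists 0, 1; rewrite mul0r add0r mul1r.
have Ia2 : Iq (- (a ^+ 2)%:P).
  exists a%:P, (- 'X).
  rewrite mulrBr mulNr ['X * _]mulrCA -['X * 'X]expr2 addrAC subrr add0r.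
  by rewrite expr2 polyCM.
have Ha3 : (a ^+ 3)%:P = (a%:P * 'X) * (a%:P * 'X) + (- (a ^+ 2)%:P) * ('X^2 - a%:P).
  rewrite mulNr mulrBr opprB addrCA mulrACA -(polyCM a a) -(expr2 a) -(expr2 'X) subrr addr0.
  by rewrite -polyCM -exprSr.
rewrite Ha3; apply: ideal_mul_add; apply: ideal_mul_gen => //; apply: one => //.
by exists 1, 0; rewrite mul0r addr0 mul1r.
Qed.
End S.

Theorem theorem3p14 (R : idomainType) (noethR : noetherian R)
  (H : forall I : {poly R} -> Prop, is_ideal I -> power_stable I) :
  is_field R.
Proof.
move=> x x0.
have [/(_ (a3_in x)) + _] := H _ (Iq_ideal x) 2%N isT (x ^+ 3).
move=> /(pow2_bound (@Iq_contr R x)) [s Hs].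
have : x ^+ 3 * (1 - x * s) = 0.
  by rewrite mulrBr mulr1 mulrA -exprSr -Hs subrr.
move/eqP; rewrite mulf_eq0 expf_eq0 /= (negbTE x0) /= subr_eq0 => /eqP E.
by apply/unitrPr; exists s; rewrite -E.
Qed.
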